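(* Fix $x\in\mathbb X$ and $\Lambda\Subset\mathbb X\setminus\{x\}$, a total order $\preceq$ on $\mathbf F(x)$, and a set $\mathbf E\subset\mathbf F(x)$ with $\mathbf E\supset\{X\in\mathbf F(x)\mid W(X)\neq1,\ X\setminus\{x\}\subset\Lambda\}$. Suppose that $Z(\Lambda)\neq0$ and, unless $z(x)W(x)=0$, assume also $Z_X(\Lambda)\neq0$ for all $X\in\mathbf E$. Then \[ \widehat z(x,\Lambda)=z(x)\prod_{X\in\mathbf F(x):\,X'\subset\Lambda}\big(1+(W(X)-1)R_X(X',\Lambda)\big). \]
   Context: $\mathbb X$ is a finite or countably infinite set, $X\Subset\mathbb X$ means finite subset, $\mathbf F$ is the set of finite subsets of $\mathbb X$. Fix $z:\mathbb X\to\mathbb C$, $W:\mathbf F\to\mathbb C$; $f^X=\prod_{y\in X}f(y)$, $W(x)=W(\{x\})$; singletons $\{x\}$ are written $x$ inside arguments. For an interaction $V:\mathbf F\to\mathbb C$, the conditional interaction is $V(X\mid B)=\prod_{C\subset B}V(X\cup C)$ if $X\cap B=\varnothing$, $V(X\mid B)=0$ if $X=\{y\}$ with $y\in B$, and $V(X\mid B)=1$ otherwise; the Boltzmann factor is $\kappa(X\mid B)=\prod_{\varnothing\neq S\subset X}V(S\mid B)$; partition functions are $Z(X,\Lambda\mid B)=\sum_{Y\subset\Lambda\setminus X}z^{X\cup Y}\kappa(X\cup Y\mid B)$, $Z(\Lambda\mid B)=Z(\varnothing,\Lambda\mid B)$, with $B$ omitted when $B=\varnothing$; correlations $R(X,\Lambda\mid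 B)=Z(X,\Lambda\mid B)/Z(\Lambda\mid B)$ when the denominator is nonzero, and effective activities $\widehat z(y,\Lambda\mid B)=R(\{y\},\Lambda\mid B)$ for $y\notin\Lambda$. Unadorned $\kappa,Z,R,\widehat z$ refer to $V=W$. Let $\mathbf F(x)=\{X\Subset\mathbb X\mid x\in X\}$ and $X'=X\setminus\{x\}$. Given the total order $\preceq$ on $\mathbf F(x)$ (strict part $\prec$) and $X\in\mathbf F(x)$, define $W_X:\mathbf F\to\mathbb C$ by $W_X(Y)=W(Y)W(\{x\}\cup Y)$ if $x\notin Y$ and $\{x\}\cup Y\prec X$; $W_X(Y)=1$ if $x\in Y$ and $Y\neq X$; $W_X(Y)=W(Y)$ otherwise. Quantities built from $V=W_X$ are written $\kappa_X,Z_X,R_X,\widehat z_X$. Convention: a product is set equal to $0$ if at least one factor is well defined and equals $0$, even if other factors are ill-defined. *)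

(* Defs.v *)
From mathcomp Require Import all_boot all_algebra finmap.
From mathcomp.real_closed Require Import complex.
From mathcomp Require Import Rstruct.

Set Implicit Arguments.
Unset Strict Implicit.
Unset Printing Implicit Defensive.

Import GRing.Theory.
Local Open Scope ring_scope.
Local Open Scope fset_scope.

Definition C : fieldType := (Rdefinitions.R)[i].

Section Cluster.
(* The ground set X is a countable type (finite or countably infinite);
   finite subsets X ⋐ 𝕏 are elements of {fset T}. *)
Variable T : countType.

Definition fpow (f : T -> C) (X : {fset T}) : C := \prod_(y <- X) f y.

Definition cond_int (V : {fset T} -> C) (B X : {fset T}) : C :=
  if X `&` B == fset0 then \prod_(D <- fpowerset B) V (X `|` D)
  else if [exists y : B, X == [fset val y]] then 0
  else 1.

Definition kappa (V : {fset T} -> C) (B X : {fset T}) : C :=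
  \prod_(S <- fpowerset X | S != fset0) cond_int V B S.

Definition Zpart (V : {fset T} -> C) (z : T -> C) (X L B : {fset T}) : C :=
  \sum_(Y <- fpowerset (L `\` X)) fpow z (X `|` Y) * kappa V B (X `|` Y).

Definition Zfun (V : {fset T} -> C) (z : T -> C) (L B : {fset T}) : C :=
  Zpart V z fset0 L B.

(* R(X, Λ | B) = Z(X, Λ | B) / Z(Λ | B)  (MathComp division: c / 0 = 0). *)
Definition Rcorr (V : {fset T} -> C) (z : T -> C) (X L B : {fset T}) : C :=
  Zpart V z X L B / Zfun V z L B.

Definition zhat (V : {fset T} -> C) (z : T -> C) (y : T) (L B : {fset T}) : C :=
  Rcorr V z [fset y] L B.

Definition total_order_on (P : {fset T} -> Prop) (le : rel {fset T}) : Prop :=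
  [/\ (forall X, P X -> le X X),
      (forall X Y, P X -> P Y -> le X Y -> le Y X -> X = Y),
      (forall X Y Z, P X -> P Y -> P Z -> le X Y -> le Y Z -> le X Z)
    & (forall X Y, P X -> P Y -> le X Y || le Y X)].

Definition strict (le : rel {fset T}) (X Y : {fset T}) : bool :=
  le X Y && (X != Y).

Definition Wmod (W : {fset T} -> C) (le : rel {fset T}) (x : T) (X : {fset T})
    (Y : {fset T}) : C :=
  if (x \notin Y) && strict le (x |` Y) X then W Y * W (x |` Y)
  else if (x \in Y) && (Y != X) then 1
  else W Y.

End Cluster.

(* Main.v *)
Require Import Defs.
From mathcomp Require Import all_boot all_algebra finmap.
From mathcomp.real_closed Require Import complex.
From mathcomp Require Import Rstruct.
Import GRing.Theory.
Local Open Scope ring_scope.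
Local Open Scope fset_scope.

Section Aux.
Variable T : countType.
Implicit Types (X Y S A B : {fset T}).

Lemma cond_int0 (V : {fset T} -> C) S : cond_int V fset0 S = V S.
Proof. by rewrite /cond_int fsetI0 eqxx fpowerset0 big_seq_fset1 fsetU0. Qed.

Lemma kappa0 (V : {fset T} -> C) Y :
  kappa V fset0 Y = \prod_(S <- fpowerset Y | S != fset0) V S.
Proof. by rewrite /kappa; apply: eq_bigr => S _; rewrite cond_int0. Qed.

Lemma Zfun0 (V : {fset T} -> C) z L :
  Zfun V z L fset0 = \sum_(Y <- fpowerset L) fpow z Y * kappa V fset0 Y.
Proof. by rewrite /Zfun /Zpart fsetD0; apply: eq_bigr => Y _; rewrite fset0U. Qed.

Lemma big_reindex (R : Type) (idx : R) (op : Monoid.com_law idx) (I J : eqType)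
   (s1 : seq I) (s2 : seq J) (h : I -> J) (F : J -> R) :
  uniq s1 -> uniq s2 -> {in s1 &, injective h} -> s2 =i map h s1 ->
  \big[op/idx]_(j <- s2) F j = \big[op/idx]_(i <- s1) F (h i).
Proof.
move=> u1 u2 inj e; rewrite -(big_map h xpredT); apply: perm_big; apply: uniq_perm => //.
by rewrite map_inj_in_uniq.
Qed.

Lemma sum_shift (g : {fset T} -> C) A L : A `<=` L ->
  \sum_(Y <- fpowerset (L `\` A)) g (A `|` Y) = \sum_(Y <- fpowerset L | A `<=` Y) g Y.
Proof.
move=> AL; symmetry; rewrite -big_filter.
apply: (@big_reindex _ _ _ _ _ (fpowerset (L `\` A)) _ (fun Y => A `|` Y)).
- exact: fset_uniq.
- by rewrite filter_uniq // fset_uniq.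
- move=> Y1 Y2; rewrite !fpowersetE => /fsubsetP H1 /fsubsetP H2 E.
  apply/fsetP => t; have := congr1 (fun S => t \in S) E => /=; rewrite !in_fsetU.
  case tA: (t \in A) => //= _.
  apply/idP/idP => [/H1|/H2]; by rewrite in_fsetD tA.
- move=> Y; rewrite mem_filter fpowersetE; apply/idP/mapP.
  + case/andP => AY YL; exists (Y `\` A).
      rewrite fpowersetE; apply/fsubsetP => t; rewrite !in_fsetD => /andP[-> tY].
      by rewrite (fsubsetP YL).
    apply/fsetP => t; rewrite in_fsetU in_fsetD.
    by case tA: (t \in A) => //=; rewrite (fsubsetP AY).
  + case=> Y'; rewrite fpowersetE => /fsubsetP H ->.
    rewrite fsubsetUl /=; apply/fsubsetP => t; rewrite in_fsetU => /orP[/(fsubsetP AL)//|/H].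
    by rewrite in_fsetD => /andP[].
Qed.


Lemma eqU1 (x : T) S X : x \notin S -> x \in X -> (x |` S == X) = (S == X `\ x).
Proof.
move=> xS xX; apply/eqP/eqP => [<-|->]; first by rewrite fsetU1K.
by rewrite fsetD1K.
Qed.

Lemma sub_notin (x : T) S Y : S `<=` Y -> x \notin Y -> x \notin S.
Proof. by move=> /fsubsetP H xY; apply/negP => /H; rewrite (negbTE xY). Qed.

Lemma subU1 (x : T) S Y : x \notin S -> (S `<=` x |` Y) = (S `<=` Y).
Proof.
move=> xS; apply/fsubsetP/fsubsetP => H t tS.
  by have := H t tS; rewrite in_fset1U; case: eqP => // E; rewrite -E tS in xS.
by rewrite in_fset1U H ?orbT.
Qed.

Section Main.
Variables (z : T -> C) (W : {fset T} -> C) (x : T) (L : {fset T}).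
Hypothesis xL : x \notin L.

Definition G A (Q : pred {fset T}) :=
  \sum_(Y <- fpowerset L | A `<=` Y) fpow z Y * kappa W fset0 Y *
     \prod_(S <- fpowerset Y | (S != fset0) && Q (x |` S)) W (x |` S).

Lemma notin_sub Y : Y `<=` L -> x \notin Y.
Proof. by move=> YL; apply: sub_notin YL xL. Qed.

Lemma kappa_mod le X Y : x \notin Y ->
  kappa (Wmod W le x X) fset0 Y = kappa W fset0 Y *
    \prod_(S <- fpowerset Y | (S != fset0) && strict le (x |` S) X) W (x |` S).
Proof.
move=> xY; rewrite !kappa0 big_mkcondr -big_split /=.
rewrite big_seq_cond [RHS]big_seq_cond; apply: eq_bigr => S /andP[SY _].
have xS : x \notin S by apply: sub_notin xY; rewrite -fpowersetE.
rewrite /Wmod xS /= (negbTE xS) /=; case: (strict le _ _); by rewrite ?mulr1.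
Qed.

Lemma G_ext A Q1 Q2 :
  (forall S, S `<=` L -> S != fset0 -> Q1 (x |` S) = Q2 (x |` S)) -> G A Q1 = G A Q2.
Proof.
move=> H; rewrite /G big_seq_cond [RHS]big_seq_cond; apply: eq_bigr => Y /andP[].
rewrite fpowersetE => YL _; congr (_ * _).
rewrite big_seq_cond [RHS]big_seq_cond; apply: eq_bigl => S.
case SY: (S \in fpowerset Y) => //=; case: eqP => //= /eqP S0; rewrite H //.
by rewrite fpowersetE in SY; apply: fsubset_trans SY YL.
Qed.

Lemma G0 Q : G fset0 Q = \sum_(Y <- fpowerset L) fpow z Y * kappa W fset0 Y *
     \prod_(S <- fpowerset Y | (S != fset0) && Q (x |` S)) W (x |` S).
Proof. by apply: eq_bigl => Y; rewrite fsub0set. Qed.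

Lemma Zfun_mod le X : Zfun (Wmod W le x X) z L fset0 = G fset0 (fun S => strict le S X).
Proof.
rewrite Zfun0 G0 big_seq [RHS]big_seq; apply: eq_bigr => Y; rewrite fpowersetE => YL.
by rewrite kappa_mod ?mulrA // notin_sub.
Qed.

Lemma Zfun_W : Zfun W z L fset0 = G fset0 (fun _ => false).
Proof.
rewrite Zfun0 G0; apply: eq_bigr => Y _; rewrite big1 ?mulr1 // => S.
by rewrite andbF.
Qed.

Lemma Zpart_mod le X : x \in X -> X `\ x `<=` L ->
  Zpart (Wmod W le x X) z (X `\ x) L fset0 = G (X `\ x) (fun S => strict le S X).
Proof.
move=> xX XL.
have := sum_shift (fun Y => fpow z Y * kappa (Wmod W le x X) fset0 Y) (X `\ x) L XL.
rewrite /= => E; rewrite /Zpart E.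
rewrite /G big_seq_cond [RHS]big_seq_cond; apply: eq_bigr => Y /andP[].
rewrite fpowersetE => YL _.
by rewrite kappa_mod ?mulrA // notin_sub.
Qed.


Lemma prod_eqX Y X : x \in X -> X `\ x != fset0 -> x \notin Y ->
  \prod_(S <- fpowerset Y | (S != fset0) && (x |` S == X)) W (x |` S) =
  if X `\ x `<=` Y then W X else 1.
Proof.
move=> xX X0 xY.
rewrite big_seq_cond (eq_bigl (fun S => (S \in fpowerset Y) && (S == X `\ x))); last first.
  move=> S /=; case SY: (S \in fpowerset Y) => //=.
  have xS : x \notin S by apply: sub_notin xY; rewrite -fpowersetE.
  rewrite eqU1 //; case: (S =P X `\ x) => [->|]; by rewrite ?X0 ?andbF.
case: ifP => XY.
  rewrite -big_filter (eq_filter (a2 := pred1 (X `\ x))); last first.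
    by move=> S /=; case: (S =P X `\ x) => [->|]; rewrite ?andbF // fpowersetE XY.
  by rewrite filter_pred1_uniq ?fset_uniq ?fpowersetE // big_seq1 fsetD1K.
by rewrite big1 // => S /andP[]; rewrite fpowersetE => + /eqP E; rewrite E XY.
Qed.

Lemma prod_split Y (Q : pred {fset T}) X : x \in X -> X `\ x != fset0 -> x \notin Y -> ~~ Q X ->
  \prod_(S <- fpowerset Y | (S != fset0) && ((x |` S == X) || Q (x |` S))) W (x |` S) =
  (if X `\ x `<=` Y then W X else 1) *
  \prod_(S <- fpowerset Y | (S != fset0) && Q (x |` S)) W (x |` S).
Proof.
move=> xX X0 xY nQ; rewrite (bigID (fun S => x |` S == X)) /= -prod_eqX //.
congr (_ * _); apply: eq_bigl => S.
  by case: (x |` S == X); rewrite ?andbT ?andbF.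
case E: (x |` S == X); last by rewrite andbT.
by rewrite (eqP E) (negbTE nQ) !andbF.
Qed.

Lemma G_step (Q : pred {fset T}) X : x \in X -> X `\ x != fset0 -> X `\ x `<=` L -> ~~ Q X ->
  G fset0 (fun S => (S == X) || Q S) = (G fset0 Q + (W X - 1) * G (X `\ x) Q)%R.
Proof.
move=> xX X0 XL nQ; rewrite !G0 /G (big_mkcond (fun Y => X `\ x `<=` Y)) mulr_sumr -big_split.
apply: eq_big_seq => Y; rewrite fpowersetE => YL.
rewrite prod_split // ?notin_sub //; move: (fpow z Y * _) (\prod_(S <- _ | _) _) => a P.
case: ifP => _ /=.
  by rewrite mulrBl mul1r addrC subrK mulrCA.
by rewrite mul1r mulr0 addr0.
Qed.

Lemma G_stepx A (Q : pred {fset T}) : G A (fun S => (S == [fset x]) || Q S) = G A Q.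
Proof.
apply: G_ext => S SL S0.
by rewrite eqU1 ?notin_sub ?fset11 // fsetDv (negbTE S0).
Qed.

Lemma fpowU1 Y : x \notin Y -> fpow z (x |` Y) = z x * fpow z Y.
Proof. by move=> xY; rewrite /fpow big_fsetU1. Qed.

Lemma kappa_add Y : x \notin Y -> kappa W fset0 (x |` Y) =
  W [fset x] * kappa W fset0 Y * \prod_(S <- fpowerset Y | S != fset0) W (x |` S).
Proof.
move=> xY; rewrite !kappa0 (bigID (fun S => x \in S)) /=.
have E1 : \prod_(S <- fpowerset (x |` Y) | (S != fset0) && ~~ (x \in S)) W S =
          \prod_(S <- fpowerset Y | S != fset0) W S.
  rewrite -[LHS]big_filter -[RHS]big_filter; apply: perm_big; apply: uniq_perm; rewrite ?filter_uniq ?fset_uniq //.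
  move=> S; rewrite !mem_filter !fpowersetE; case: (S != fset0) => //=.
  case xS: (x \in S) => /=.
    by apply/esym/negbTE; apply: contraNN xY => /fsubsetP H; apply: H.
  by rewrite subU1 ?xS.
have E2 : \prod_(S <- fpowerset (x |` Y) | (S != fset0) && (x \in S)) W S =
          W [fset x] * \prod_(S <- fpowerset Y | S != fset0) W (x |` S).
  rewrite (eq_bigl (fun S => x \in S)); last first.
    move=> S /=; case xS: (x \in S); rewrite ?andbT ?andbF //.
    by apply/eqP => S0; rewrite S0 in_fset0 in xS.
  rewrite -big_filter.
  rewrite (@big_reindex _ _ _ _ _ (fpowerset Y) _ (fun S => x |` S)).
  - by rewrite (bigD1_seq fset0) ?fset_uniq ?fpowersetE ?fsub0set // fsetU0.
  - exact: fset_uniq.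
  - by rewrite filter_uniq ?fset_uniq.
  - move=> S1 S2; rewrite !fpowersetE => S1Y S2Y E.
    by rewrite -(fsetU1K (sub_notin _ _ _ S1Y xY)) E fsetU1K // (sub_notin _ _ _ S2Y xY).
  - move=> S; rewrite mem_filter fpowersetE; apply/idP/mapP.
      case/andP => xS SY; exists (S `\ x); last by rewrite fsetD1K.
      rewrite fpowersetE -(subU1 x (S `\ x) Y); last by rewrite in_fsetD1 eqxx.
      by apply/fsubsetP => t; rewrite in_fsetD1 => /andP[_ tS]; apply: (fsubsetP SY).
    case=> S'; rewrite fpowersetE => S'Y ->.
    by rewrite fset1U1 /= fsetUS.
by rewrite E1 E2 /= mulrAC.
Qed.

Lemma Zpart_x : Zpart W z [fset x] L fset0 = z x * W [fset x] * G fset0 (fun _ => true).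
Proof.
rewrite /Zpart G0 (_ : L `\` [fset x] = L); last first.
  apply/fsetP => t; rewrite in_fsetD in_fset1; case: eqP => // ->.
  by rewrite (negbTE xL).
rewrite mulr_sumr; apply: eq_big_seq => Y; rewrite fpowersetE => YL.
rewrite fpowU1 ?kappa_add ?notin_sub //.
rewrite (eq_bigl (fun S => S != fset0) _ (fun S => andbT (S != fset0))).
by rewrite !mulrA; congr (_ * _ * _); exact: mulrAC.
Qed.

End Main.
End Aux.

Theorem corollary4p3 (T : countType) (z : T -> C) (W : {fset T} -> C)
    (x : T) (L : {fset T}) (le : rel {fset T}) (E : {fset T} -> Prop) :
  x \notin L ->
  total_order_on (fun X => x \in X) le ->
  (forall X, E X -> x \in X) ->
  (forall X, x \in X -> W X != 1 -> X `\ x `<=` L -> E X) ->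
  Zfun W z L fset0 != 0 ->
  (z x * W [fset x] != 0 ->
     forall X, E X -> Zfun (Wmod W le x X) z L fset0 != 0) ->
  zhat W z x L fset0 =
    z x * \prod_(X <- fpowerset (x |` L) | x \in X)
            (1 + (W X - 1) * Rcorr (Wmod W le x X) z (X `\ x) L fset0).
Proof.
move=> xL [le_refl le_anti le_tr le_total] EX Ehyp Z1nz Hmod.
set Z1 := Zfun W z L fset0 in Z1nz *.
set f := fun X => (1 + (W X - 1) * Rcorr (Wmod W le x X) z (X `\ x) L fset0)%R.
set s0 : seq {fset T} := [seq X <- fpowerset (x |` L) | x \in X].
have mem_s0 : forall X : {fset T}, (X \in s0) = (x \in X) && (X `\ x `<=` L).
  move=> X; rewrite mem_filter fpowersetE; case xX: (x \in X) => //=.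
  apply/fsubsetP/fsubsetP => H t.
    rewrite in_fsetD1 => /andP[tx tX]; have := H t tX.
    by rewrite in_fset1U (negbTE tx).
  move=> tX; rewrite in_fset1U; case: eqP => //= /eqP tx.
  by apply: H; rewrite in_fsetD1 tx.
have us0 : uniq s0 by rewrite filter_uniq // fset_uniq.
set s := sort le s0.
have us : uniq s by rewrite sort_uniq.
have ms : s =i s0 by exact: mem_sort.
have Ps0 : all (fun X : {fset T} => x \in X) s0 by exact: filter_all.
have pw : pairwise le s.
  have trin : {in (fun X : {fset T} => x \in X) & &, transitive le}.
    by move=> Y X Z xY xX xZ; apply: le_tr.
  have tot : {in (fun X : {fset T} => x \in X) &, total le} by move=> X Y xX xY; apply: le_total.
  have := sort_sorted_in tot Ps0.
  rewrite (sorted_pairwise_in trin) //.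
  by apply/allP => X; rewrite ms => /(allP Ps0).
have Eprod : \prod_(X <- fpowerset (x |` L) | x \in X) f X = \prod_(X <- s) f X.
  by rewrite -big_filter; apply: perm_big; rewrite perm_sym perm_sort perm_refl.
set c := fun p : seq {fset T} => if [fset x] \in p then W [fset x] else 1.
set Inv := fun p : seq {fset T} =>
  Z1 * \prod_(X <- p) f X = c p * G T z W x L fset0 (fun S => S \in p) \/
  (\prod_(X <- p) f X = 0 /\ z x * W [fset x] = 0).
have inS : forall S, S `<=` L -> x |` S \in s.
  move=> S SL; rewrite ms mem_s0 fset1U1 /= fsetU1K //.
  by apply/negP => /(fsubsetP SL); rewrite (negbTE xL).
have main : forall q p, s = p ++ q -> Inv p -> Inv s.
  elim=> [|X q IH] p Es Ip; first by rewrite Es cats0.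
  apply: (IH (rcons p X)); first by rewrite cat_rcons.
  have Xs : X \in s by rewrite Es mem_cat inE eqxx orbT.
  have := us; rewrite Es cat_uniq /= => /and3P[_ /norP[XnP _] /andP[Xnq _]].
  have /andP[xX XL] : (x \in X) && (X `\ x `<=` L) by rewrite -mem_s0 -ms.
  have pre : forall Y, Y \in s -> (Y \in p) = strict le Y X.
    move=> Y Ys; have /andP[xY _] : (x \in Y) && (Y `\ x `<=` L) by rewrite -mem_s0 -ms.
    move: pw; rewrite Es pairwise_cat => /and3P[ar _ pq].
    case Yp: (Y \in p).
      rewrite /strict (allrelP ar Y X Yp (mem_head _ _)) /=.
      by case: eqP => // YX; move: XnP; rewrite -YX Yp.
    move: Ys; rewrite Es mem_cat Yp inE /= => /orP[/eqP ->|Yq].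
      by rewrite /strict eqxx andbF.
    move: pq; rewrite pairwise_cons => /andP[/allP aX _].
    rewrite /strict; case leYX: (le Y X) => //=.
    have YX := le_anti Y X xY xX leYX (aX Y Yq).
    by rewrite -YX Yq in Xnq.
  have Zg : Zfun (Wmod W le x X) z L fset0 = G T z W x L fset0 (fun S => S \in p).
    rewrite (Zfun_mod _ z W x L xL); apply: G_ext => S SL _.
    by rewrite pre // inS.
  have Gr : forall A, G T z W x L A (fun S => S \in rcons p X) =
                      G T z W x L A (fun S => (S == X) || (S \in p)).
    by move=> A; apply: G_ext => S _ _; rewrite mem_rcons inE.
  rewrite /Inv; have -> : \prod_(Y <- rcons p X) f Y = (\prod_(Y <- p) f Y * f X)%R by rewrite -cats1 big_cat big_seq1.
  rewrite Gr {1}/c mem_rcons inE.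
  move: Ip; rewrite /Inv => Ip.
  set g := G T z W x L fset0 (fun S => S \in p) in Zg Ip *.
  set P := \prod_(Y <- p) f Y in Ip *.
  case: (X =P [fset x]) => [EX1|NX1].
    subst X.
    have cp : c p = 1 by rewrite /c (negbTE XnP).
    have RX : Rcorr (Wmod W le x [fset x]) z ([fset x] `\ x) L fset0 =
              Zfun (Wmod W le x [fset x]) z L fset0 / Zfun (Wmod W le x [fset x]) z L fset0.
      by rewrite /Rcorr fsetDv.
    rewrite eqxx orTb (G_stepx _ z W x L xL) -/g. 
    case: Ip => [H|[P0 zW0]]; last first. right. rewrite P0 mul0r. by [].
    left; rewrite cp mul1r in H. 
    rewrite /f RX Zg -/g mulrA H. 
    case: (g =P 0) => [->|g0]; first by rewrite !mul0r mulr0.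
    have g0' : g != 0 by apply/eqP.
    by rewrite divff // mulr1 addrC subrK mulrC.
  have X0 : X `\ x != fset0.
    by apply/eqP => X0; apply: NX1; rewrite -(fsetD1K xX) X0 fsetU0.
  have Zh : Zpart (Wmod W le x X) z (X `\ x) L fset0 = G T z W x L (X `\ x) (fun S => S \in p).
    rewrite (Zpart_mod _ z W x L xL) //; apply: G_ext => S SL _.
    by rewrite pre // inS.
  set h := G T z W x L (X `\ x) (fun S => S \in p) in Zh.
  have nX1 : (X == [fset x]) = false by apply/eqP.
  rewrite (G_step _ z W x L xL) // -/g -/h.
  rewrite [[fset x] == X]eq_sym nX1 orFb. 
  case: Ip => [H|[P0 zW0]]; last by right; rewrite P0 mul0r.
  have fX : f X = (1 + (W X - 1) * (h / g))%R by rewrite /f /Rcorr Zh Zg.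
  rewrite fX.
  case: (W X =P 1) => [->|W1].
    by left; rewrite subrr !mul0r !addr0 mulr1; exact: H.
  case: (g =P 0) => [g0|g0].
    case: (z x * W [fset x] =P 0) => [zw0|zw0].
      right; split => //.
      have : Z1 * P = 0 by rewrite H g0 mulr0.
      by move/eqP; rewrite mulf_eq0 (negbTE Z1nz) /= => /eqP ->; rewrite mul0r.
    exfalso; have := Hmod (introN eqP zw0) X (Ehyp X xX (introN eqP W1) XL).
    by rewrite Zg g0 eqxx.
  left; rewrite mulrA H.
  have g0' : g != 0 by apply/eqP.
  rewrite -mulrA; congr (_ * _).
  by rewrite mulrDr mulr1 mulrCA (mulrCA g h) mulfV // mulr1.
have Inv0 : Inv [::].
  left; rewrite big_nil mulr1 /c in_nil mul1r /Z1 (Zfun_W _ z W x L).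
  by apply: G_ext.
have Hs : G T z W x L fset0 (fun S => S \in s) = G T z W x L fset0 (fun _ => true).
  by apply: G_ext => S SL _; rewrite inS.
have cs : c s = W [fset x] by rewrite /c ms mem_s0 fset11 fsetDv fsub0set.
rewrite /zhat /Rcorr (Zpart_x _ z W x L xL) -/Z1 Eprod.
have [H|[P0 zW0]] := main s [::] erefl Inv0.
  rewrite Hs cs in H.
  by rewrite -(mulrA (z x) (W [fset x])) -H mulrCA mulrAC mulfV // mul1r.
by rewrite zW0 P0 !mul0r mulr0.
Qed.
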